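(* Let $V,\mathfrak{a}$ be finite-dimensional vector spaces over $\mathbb{Q}$, and let $\varphi^1_i,\varphi^2_j\in\mathfrak{a}^*$, $\chi^1_i,\chi^2_j\in V^*$ for $i=1,\dots,k_1$, $j=1,\dots,k_2$. For $v\in V(\mathbb{R})=V\otimes\mathbb{R}$ and $l=1,2$ set $P^l(v)=\{\lambda\in\mathfrak{a}(\mathbb{R}):\langle\varphi^l_i,\lambda\rangle\ge-\chi^l_i(v)\ \text{for all } i=1,\dots,k_l\}$. Suppose there is $v\in V(\mathbb{R})$ such that $P^1(v)=P^2(v)$ and this polytope has dimension $\dim\mathfrak{a}(\mathbb{R})$. Then for every neighborhood $O$ of $v$ in $V(\mathbb{R})$ there is $v'\in O\cap V$ with $P^1(v')=P^2(v')$.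
   Context: $\mathfrak{a}(\mathbb{R})=\mathfrak{a}\otimes_{\mathbb{Q}}\mathbb{R}$; elements of $\mathfrak{a}^*$ and $V^*$ are extended $\mathbb{R}$-linearly. $V$ is regarded as the set of rational points of $V(\mathbb{R})$. *)

(* Defs.v *)
From HB Require Import structures.
From mathcomp Require Import all_boot all_order all_algebra.
From mathcomp Require Import all_classical all_reals all_analysis.
Set Implicit Arguments. Unset Strict Implicit. Unset Printing Implicit Defensive.
Import Order.TTheory GRing.Theory Num.Theory.
Import numFieldNormedType.Exports.
Local Open Scope ring_scope.
Local Open Scope classical_set_scope.

(* V = Q^n, a = Q^m (coordinates fixed); V(R) = 'rV[R]_n, a(R) = 'rV[R]_m.
   A rational linear functional f in (Q^m)^* is a row vector 'rV[rat]_m,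
   extended R-linearly: <f, x> = \sum_i f_i x_i. *)
Definition evalQ (R : realType) (m : nat) (f : 'rV[rat]_m) (x : 'rV[R]_m) : R :=
  \sum_(i < m) ratr (f 0 i) * x 0 i.

Definition polyhedronP (R : realType) (n m k : nat)
  (phi : 'I_k -> 'rV[rat]_m) (chi : 'I_k -> 'rV[rat]_n) (v : 'rV[R]_n)
  : set 'rV[R]_m :=
  [set lam | forall i : 'I_k, - evalQ (chi i) v <= evalQ (phi i) lam].

(* S has (affine) dimension m = dim a(R): S contains a point p0 and points
   p0 + D_i (i < m) whose differences D_i are linearly independent,
   i.e. the affine hull of S is all of R^m. *)
Definition full_dim (R : realType) (m : nat) (S : set 'rV[R]_m) : Prop :=
  exists (p0 : 'rV[R]_m) (D : 'M[R]_m),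
    S p0 /\ (forall i : 'I_m, S (p0 + row i D)) /\ \rank D = m.

(* Main.v *)
Require Import Defs.
From HB Require Import structures.
From mathcomp Require Import all_boot all_order all_algebra.
From mathcomp Require Import all_classical all_reals all_analysis.
From mathcomp Require Import ring lra.
Import Order.TTheory GRing.Theory Num.Theory.
Import numFieldNormedType.Exports.
Local Open Scope ring_scope.
Local Open Scope classical_set_scope.

Section FM.
Variable R : realType.

Fixpoint cval (a : seq rat) (z : nat -> R) : R :=
  if a is a0 :: a' then ratr a0 * z 0%N + cval a' (fun i => z i.+1) else 0.

Fixpoint comb (s t : rat) (a b : seq rat) : seq rat :=
  match a, b with
  | [::], _ => map (fun y => t * y) b
  | _, [::] => map (fun x => s * x) a
  | x :: a', y :: b' => (s * x + t * y) :: comb s t a' b'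
  end.

Lemma cval_scale t b z : cval (map (fun y => t * y) b) z = ratr t * cval b z.
Proof.
elim: b z => [|y b IH] z /=; first by rewrite mulr0.
by rewrite IH rmorphM /=; ring.
Qed.

Lemma cval_comb s t a b z :
  cval (comb s t a b) z = ratr s * cval a z + ratr t * cval b z.
Proof.
elim: a b z => [|x a IH] [|y b] z /=.
- by rewrite !mulr0 addr0.
- by rewrite cval_scale rmorphM /=; ring.
- by rewrite cval_scale rmorphM /=; ring.
- by rewrite IH rmorphD !rmorphM /=; ring.
Qed.

Lemma cval_ext a z z' : (forall i, (i < size a)%N -> z i = z' i) -> cval a z = cval a z'.
Proof.
elim: a z z' => [|x a IH] z z' //= H.
by rewrite H // (IH _ (fun i => z' i.+1)) // => i Hi; apply: H.
Qed.

Definition shift0 (y : R) (z : nat -> R) : nat -> R :=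
  fun i => if i is j.+1 then z j else y.

Lemma cval_shift0 a y z :
  cval a (shift0 y z) = ratr (head 0 a) * y + cval (behead a) z.
Proof. by case: a => [|x a] /=; rewrite ?rmorph0 ?mul0r ?addr0. Qed.

Definition cons_t := (bool * seq rat)%type.
Definition holds (c : cons_t) (z : nat -> R) : bool :=
  if c.1 then 0 < cval c.2 z else 0 <= cval c.2 z.
Definition holdsS (S : seq cons_t) z := all (fun c => holds c z) S.

Definition elim1 (S : seq cons_t) : seq cons_t :=
  [seq (c.1, behead c.2) | c <- S & head 0 c.2 == 0] ++
  [seq (p.1 || q.1, comb (- head 0 q.2) (head 0 p.2) (behead p.2) (behead q.2))
    | p <- [seq c <- S | 0 < head 0 c.2], q <- [seq c <- S | head 0 c.2 < 0]].

Lemma argmax (T : eqType) (f : T -> R) (s : seq T) : s != [::] ->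
  exists2 x, x \in s & forall y, y \in s -> f y <= f x.
Proof.
elim: s => [//|x s IH] _.
case: (eqVneq s [::]) => [->|/IH [x' xs Hx']].
  by exists x => [|y]; rewrite ?inE // => /eqP ->.
case: (leP (f x) (f x')) => H.
  exists x' => [|y]; first by rewrite inE xs orbT.
  by rewrite inE => /orP[/eqP ->|/Hx'].
exists x => [|y]; first by rewrite inE eqxx.
rewrite inE => /orP[/eqP ->//|/Hx' Hy]; exact: (le_trans Hy (ltW H)).
Qed.

Lemma interval (T : eqType) (s : seq T) (isL isU : pred T) (bnd : T -> R)
  (st : T -> bool) :
  (forall p q, p \in s -> q \in s -> isL p -> isU q ->
     if st p || st q then bnd p < bnd q else bnd p <= bnd q) ->
  exists y, (forall p, p \in s -> isL p -> if st p then bnd p < y else bnd p <= y) /\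
            (forall q, q \in s -> isU q -> if st q then y < bnd q else y <= bnd q).
Proof.
move=> H.
have stle (b : bool) (x y : R) : x < y -> if b then x < y else x <= y.
  by case: b => // /ltW.
case: (eqVneq [seq p <- s | isL p] [::]) => [L0|/(@argmax _ bnd _)[p0 p0s Hp0]].
  case: (eqVneq [seq q <- s | isU q] [::]) => [U0|/(@argmax _ (fun x => - bnd x) _)[q0 q0s Hq0]].
    exists 0; split.
      move=> p ps pL; suff: p \in [seq p <- s | isL p] by rewrite L0. by rewrite mem_filter pL ps.
    move=> q qs qU; suff: q \in [seq q <- s | isU q] by rewrite U0. by rewrite mem_filter qU qs.
  exists (bnd q0 - 1); split.
    move=> p ps pL; suff: p \in [seq p <- s | isL p] by rewrite L0. by rewrite mem_filter pL ps.
  move=> q qs qU; apply: stle.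
  have := Hq0 q; rewrite mem_filter qU qs => /(_ isT); lra.
move: p0s; rewrite mem_filter => /andP[p0L p0s].
case: (eqVneq [seq q <- s | isU q] [::]) => [U0|/(@argmax _ (fun x => - bnd x) _)[q0 q0s Hq0]].
  exists (bnd p0 + 1); split; last first.
    move=> q qs qU; suff: q \in [seq q <- s | isU q] by rewrite U0. by rewrite mem_filter qU qs.
  move=> p ps pL; apply: stle.
  have := Hp0 p; rewrite mem_filter pL ps => /(_ isT); lra.
move: q0s; rewrite mem_filter => /andP[q0U q0s].
have H00 := H _ _ p0s q0s p0L q0U.
have H00' : bnd p0 <= bnd q0 by move: H00; case: ifP => // _ /ltW.
case: (ltrP (bnd p0) (bnd q0)) => Hlt.
  exists ((bnd p0 + bnd q0) / 2); split.
    move=> p ps pL; apply: stle.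
    have := Hp0 p; rewrite mem_filter pL ps => /(_ isT); lra.
  move=> q qs qU; apply: stle.
  have := Hq0 q; rewrite mem_filter qU qs => /(_ isT); lra.
have Heq : bnd p0 = bnd q0 by apply/eqP; rewrite eq_le H00' Hlt.
exists (bnd p0); split.
  move=> p ps pL; have := H _ _ ps q0s pL q0U; rewrite -Heq.
  have := Hp0 p; rewrite mem_filter pL ps => /(_ isT).
  by case: (st p) => //=.
move=> q qs qU; have := H _ _ p0s qs p0L qU.
have := Hq0 q; rewrite mem_filter qU qs => /(_ isT).
rewrite lerN2 Heq.
by case: (st q); rewrite ?orbT //=.
Qed.


Lemma comb_sign (a b X Y : R) (sp sq : bool) : 0 < a -> b < 0 ->
  (if sp then 0 < X else 0 <= X) -> (if sq then 0 < Y else 0 <= Y) ->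
  if sp || sq then 0 < -b*X + a*Y else 0 <= -b*X + a*Y.
Proof.
move=> a0 b0; have nb0 : 0 < -b by lra.
have ha := ltW a0; have hnb := ltW nb0.
case: sp; case: sq => /= HX HY.
- by have := mulr_gt0 nb0 HX; have := mulr_gt0 a0 HY; lra.
- by have := mulr_gt0 nb0 HX; have := mulr_ge0 ha HY; lra.
- by have := mulr_ge0 hnb HX; have := mulr_gt0 a0 HY; lra.
- by have := mulr_ge0 hnb HX; have := mulr_ge0 ha HY; lra.
Qed.

Lemma lowP (a C y : R) (b : bool) : 0 < a ->
  (if b then -C/a < y else -C/a <= y) -> (if b then 0 < a*y + C else 0 <= a*y + C).
Proof.
move=> a0; have E : a*y + C = a * (y - (-C/a)) by field; rewrite gt_eqF.
rewrite E; case: b => H.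
  by apply: mulr_gt0 => //; rewrite subr_gt0.
by apply: mulr_ge0; [apply: ltW|rewrite subr_ge0].
Qed.

Lemma upP (a C y : R) (b : bool) : a < 0 ->
  (if b then y < -C/a else y <= -C/a) -> (if b then 0 < a*y + C else 0 <= a*y + C).
Proof.
move=> a0; have E : a*y + C = (- a) * (-C/a - y) by field; rewrite lt_eqF.
have na0 : 0 < - a by lra.
rewrite E; case: b => H.
  by apply: mulr_gt0 => //; rewrite subr_gt0.
by apply: mulr_ge0; [apply: ltW|rewrite subr_ge0].
Qed.

Lemma elim1P S z : (exists y, holdsS S (shift0 y z)) <-> holdsS (elim1 S) z.
Proof.
split.
  move=> [y /allP H]; apply/allP => c; rewrite mem_cat => /orP[].
    move=> /mapP[c0]; rewrite mem_filter => /andP[/eqP h0 c0S] ->.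
    have := H _ c0S; rewrite /holds /= cval_shift0 h0 rmorph0 mul0r add0r.
    done.
  move=> /allpairsP[[p q] /= [ps qs ->]].
  move: ps qs; rewrite !mem_filter => /andP[p0 pS] /andP[q0 qS].
  have Hp := H _ pS; have Hq := H _ qS.
  move: Hp Hq; rewrite /holds /= !cval_shift0 cval_comb.
  rewrite rmorphN /=.
  have a0 : 0 < ratr (head 0 p.2) :> R by rewrite ltr0q.
  have b0 : ratr (head 0 q.2) < 0 :> R by rewrite ltrq0.
  move=> Hp Hq.
  have := @comb_sign _ _ _ _ _ _ a0 b0 Hp Hq.
  set b := ratr (head 0 q.2); set a := ratr (head 0 p.2).
  have -> : - b * (a * y + cval (behead p.2) z) + a * (b * y + cval (behead q.2) z)
    = - b * cval (behead p.2) z + a * cval (behead q.2) z by ring.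
  done.
move=> /allP H.
pose bnd (c : cons_t) := - cval (behead c.2) z / ratr (head 0 c.2).
case: (@interval _ S (fun c => 0 < head 0 c.2) (fun c => head 0 c.2 < 0)
  bnd (fun c => c.1)) => [p q pS qS /= p0 q0|y [Hl Hu]].
  have : (p.1 || q.1, comb (- head 0 q.2) (head 0 p.2) (behead p.2) (behead q.2))
     \in elim1 S.
    rewrite mem_cat; apply/orP; right; apply/allpairsP.
    by exists (p, q); rewrite !mem_filter p0 q0 pS qS.
  move=> /H; rewrite /holds /= cval_comb rmorphN /= /bnd.
  have a0 : 0 < ratr (head 0 p.2) :> R by rewrite ltr0q.
  have b0 : ratr (head 0 q.2) < 0 :> R by rewrite ltrq0.
  set b := ratr (head 0 q.2); set a := ratr (head 0 p.2); set P := cval (behead p.2) z; set Q := cval (behead q.2) z.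
  have E : - Q / b - - P / a = (- b * P + a * Q) / (a * - b).
    by field; rewrite (lt_eqF b0) (gt_eqF a0).
  have ab : 0 < a * - b by apply: mulr_gt0 => //; lra.
  case: (_ || _) => HX.
    by rewrite -subr_gt0 E; apply: divr_gt0.
  by rewrite -subr_ge0 E; apply: divr_ge0 => //; apply: ltW.
exists y; apply/allP => c cS; rewrite /holds cval_shift0.
case: (ltgtP (head 0 c.2) 0) => hc.
- by apply: upP; [rewrite ltrq0|apply: Hu].
- by apply: lowP; [rewrite ltr0q|apply: Hl].
have : (c.1, behead c.2) \in elim1 S.
  by rewrite mem_cat; apply/orP; left; apply/mapP; exists c; rewrite // mem_filter hc eqxx.
by move=> /H; rewrite /holds /= hc rmorph0 mul0r add0r.
Qed.


Fixpoint elimN (k : nat) (S : seq cons_t) : seq cons_t :=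
  if k is k'.+1 then elimN k' (elim1 S) else S.

Definition catf (k : nat) (y z : nat -> R) : nat -> R :=
  fun i => if (i < k)%N then y i else z (i - k)%N.

Lemma elimNP k S z : (exists y, holdsS S (catf k y z)) <-> holdsS (elimN k S) z.
Proof.
elim: k S => [|k IH] S /=.
  split; first by move=> [y]; congr holdsS; apply: funext => i; rewrite /catf subn0.
  by move=> H; exists (fun _ => 0); congr holdsS: H; apply: funext => i; rewrite /catf subn0.
rewrite -IH; split.
  move=> [y Hy]; exists (fun j => y j.+1); apply/elim1P; exists (y 0%N).
  congr holdsS: Hy; apply: funext => -[|i] //=; rewrite /catf /=.
move=> [y' /elim1P [y0 Hy]]; exists (shift0 y0 y').
congr holdsS: Hy; apply: funext => -[|i] //=; rewrite /catf /=.
Qed.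


Lemma cval_sum a z : cval a z = \sum_(i < size a) ratr a`_i * z i.
Proof.
elim: a z => [|x a IH] z /=; first by rewrite big_ord0.
by rewrite big_ord_recl /= IH.
Qed.

Lemma sum_ext0 (G : nat -> R) N1 N2 : (N1 <= N2)%N -> (forall i, (N1 <= i)%N -> G i = 0) ->
  \sum_(i < N1) G i = \sum_(i < N2) G i.
Proof.
move=> le H; rewrite -!(big_mkord xpredT) (big_cat_nat (leq0n N1) le) /=.
rewrite [X in _ + X]big_nat_cond [X in _ + X]big1 ?addr0 // => i /andP[/andP[Hi _] _]; exact: H.
Qed.

Definition vfun n (x : 'rV[R]_n) : nat -> R :=
  fun i => oapp (fun j : 'I_n => x 0 j) 0 (insub i).
Arguments vfun {n}.

Lemma vfunE n (x : 'rV[R]_n) (j : 'I_n) : vfun x j = x 0 j.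
Proof. by rewrite /vfun valK. Qed.

Lemma vfun0 n (x : 'rV[R]_n) i : (n <= i)%N -> vfun x i = 0.
Proof. by move=> H; rewrite /vfun insubN // -leqNgt. Qed.

Lemma cval_vfun n a (x : 'rV[R]_n) :
  cval a (vfun x) = \sum_(j < n) ratr a`_j * x 0 j.
Proof.
rewrite cval_sum (@sum_ext0 (fun i => ratr a`_i * vfun x i) _ (size a + n)) ?leq_addr //; last first.
  by move=> i Hi; rewrite nth_default // rmorph0 mul0r.
rewrite -(@sum_ext0 (fun i => ratr a`_i * vfun x i) n (size a + n)) ?leq_addl //; last first.
  by move=> i Hi; rewrite vfun0 // mulr0.
by apply: eq_bigr => j _; rewrite vfunE.
Qed.

Definition rowl m (f : 'rV[rat]_m) : seq rat := [seq f 0 j | j <- enum 'I_m].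
Arguments rowl {m}.

Lemma size_rowl m (f : 'rV[rat]_m) : size (rowl f) = m.
Proof. by rewrite size_map size_enum_ord. Qed.

Lemma cval_rowl m (f : 'rV[rat]_m) (x : 'rV[R]_m) : cval (rowl f) (vfun x) = evalQ f x.
Proof.
rewrite cval_vfun /evalQ; apply: eq_bigr => j _.
by rewrite /rowl (nth_map j) ?size_enum_ord // nth_ord_enum.
Qed.

Lemma cval_cat a b z : cval (a ++ b) z = cval a z + cval b (fun i => z (i + size a)%N).
Proof.
elim: a z => [|x a IH] z /=.
  by rewrite add0r; congr cval; apply: funext => i; rewrite addn0.
rewrite IH addrA; congr (_ + cval b _); apply: funext => i; by rewrite addnS.
Qed.

Lemma cval_catf m a b y w : size a = m ->
  cval (a ++ b) (catf m y w) = cval a y + cval b w.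
Proof.
move=> sa; rewrite cval_cat; congr (_ + _).
  by apply: cval_ext => i; rewrite sa /catf => ->.
by congr cval; apply: funext => i; rewrite /catf sa ltnNge leq_addl /= addnK.
Qed.

Definition negl (a : seq rat) := map (fun y => -1 * y) a.

Lemma cval_negl a z : cval (negl a) z = - cval a z.
Proof. by rewrite /negl cval_scale rmorphN1 mulN1r. Qed.

Section Sys.
Variables (n m kA kB : nat).
Variables (phiA : 'I_kA -> 'rV[rat]_m) (chiA : 'I_kA -> 'rV[rat]_n).
Variables (phiB : 'I_kB -> 'rV[rat]_m) (chiB : 'I_kB -> 'rV[rat]_n).

Definition SysJ (j : 'I_kB) : seq cons_t :=
  [seq (false, rowl (phiA i) ++ rowl (chiA i)) | i <- enum 'I_kA] ++
  [:: (true, negl (rowl (phiB j) ++ rowl (chiB j)))].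

Lemma SysJP j (lam : 'rV[R]_m) (v : 'rV[R]_n) :
  holdsS (SysJ j) (catf m (vfun lam) (vfun v)) <->
  (polyhedronP phiA chiA v lam) /\ (evalQ (phiB j) lam < - evalQ (chiB j) v).
Proof.
rewrite /holdsS all_cat /= andbT all_map /holds /= cval_negl cval_catf ?size_rowl //.
rewrite !cval_rowl.
have E i : (0 <= cval (rowl (phiA i) ++ rowl (chiA i)) (catf m (vfun lam) (vfun v)))
   = (- evalQ (chiA i) v <= evalQ (phiA i) lam).
  rewrite cval_catf ?size_rowl // !cval_rowl.
  by apply/idP/idP => H; lra.
split.
  move=> /andP[/allP H1 H2]; split; last by lra.
  by move=> i; have := H1 i (mem_enum _ i); rewrite /= E.
move=> [H1 H2]; apply/andP; split; last by lra.
by apply/allP => i _ /=; rewrite E; apply: H1.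
Qed.

Definition EsAB := [seq elimN m (SysJ j) | j <- enum 'I_kB].

Lemma inclP (v : 'rV[R]_n) :
  polyhedronP phiA chiA v `<=` polyhedronP phiB chiB v <->
  all (fun E => ~~ holdsS E (vfun v)) EsAB.
Proof.
split.
  move=> Hsub; apply/allP => E /mapP[j _ ->]; apply/negP => /elimNP [y Hy].
  pose lam := \row_(i < m) y i.
  have Ey : catf m y (vfun v) = catf m (vfun lam) (vfun v).
    apply: funext => i; rewrite /catf; case: ifP => // Hi.
    by rewrite /vfun insubT /= mxE.
  move: Hy; rewrite Ey => /SysJP [HA HB].
  have := Hsub _ HA j; lra.
move=> H lam Plam j; rewrite leNgt; apply/negP => Hlt.
have := allP H _ (map_f (fun j => elimN m (SysJ j)) (mem_enum _ j)).
move/negP; apply; apply/elimNP; exists (vfun lam); exact/SysJP.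
Qed.

End Sys.


Lemma nbhs_box {n} (v : 'rV[R]_n) O : nbhs v O ->
  exists2 e : R, 0 < e & forall x : 'rV[R]_n, (forall j, `|v 0 j - x 0 j| < e) -> O x.
Proof.
move=> /nbhs_ballP[e e0 H]; exists e => // x Hx; apply: H.
split => // i j; rewrite (ord1 i). exact: Hx.
Qed.

Lemma approx_rat (r e : R) : 0 < e -> exists q : rat, `|ratr q - r| < e.
Proof.
move=> e0; have [|q] := @rat_in_itvoo R (r - e) (r + e); first by lra.
rewrite in_itv /= => /andP[h1 h2]; exists q; rewrite ltr_norml; apply/andP; split; lra.
Qed.

Lemma kerB {n p} (M : 'M[rat]_(n, p)) (v : 'rV[R]_n) (d : R) :
  v *m map_mx ratr M = 0 -> 0 < d ->
  exists x : 'rV[rat]_n, x *m M = 0 /\ forall j, `|map_mx ratr x 0 j - v 0 j| < d.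
Proof.
move=> Hv d0.
have : (v <= kermx (map_mx ratr M))%MS by rewrite sub_kermx Hv.
rewrite -map_kermx => /submxP [w Hw].
set K := kermx M in Hw *.
pose C := \sum_(j < n) \sum_(k < n) `|ratr (K k j) : R|.
have C0 : 0 <= C by apply: sumr_ge0 => j _; apply: sumr_ge0 => k _.
pose eta := d / (1 + C).
have C1 : 0 < 1 + C by apply: (lt_le_trans ltr01); rewrite lerDl.
have eta0 : 0 < eta by apply: divr_gt0.
have E : eta * (1 + C) = d by rewrite /eta; field; rewrite gt_eqF.
have [f Hf] := choice (fun k : 'I_n => @approx_rat (w 0 k) _ eta0).
pose w' := \row_k f k.
exists (w' *m K); split; first by rewrite -mulmxA mulmx_ker mulmx0.
move=> j; rewrite map_mxM Hw (_ : _ - _ = ((map_mx ratr w' - w) *m map_mx ratr K) 0 j); last by rewrite mulmxBl !mxE.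
rewrite mxE.
apply: (le_lt_trans (ler_norm_sum _ _ _)).
apply: (@le_lt_trans _ _ (\sum_k eta * `|ratr (K k j) : R|)).
  apply: ler_sum => k _; rewrite !mxE normrM; apply: ler_wpM2r => //.
  by apply: ltW; have := Hf k.
rewrite -mulr_sumr.
have Cj : \sum_(k < n) `|ratr (K k j) : R| <= C.
  rewrite /C [X in _ <= X](bigD1 j) //= lerDl; apply: sumr_ge0 => j' _; apply: sumr_ge0 => k _.
  done.
apply: (le_lt_trans (ler_wpM2l (ltW eta0) Cj)).
by rewrite mulrDr mulr1 in E; rewrite -E ltr_pwDl.
Qed.

Definition cnorm n (b : seq rat) : R := \sum_(j < n) `|ratr b`_j : R|.

Lemma Lip {n} (b : seq rat) (x v : 'rV[R]_n) (d : R) :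
  (forall j, `|x 0 j - v 0 j| <= d) ->
  cval b (vfun x) <= cval b (vfun v) + cnorm n b * d.
Proof.
move=> H; rewrite !cval_vfun.
suff : \sum_(j < n) ratr b`_j * x 0 j - \sum_(j < n) ratr b`_j * v 0 j <= cnorm n b * d by lra.
have -> : \sum_(j < n) ratr b`_j * x 0 j - \sum_(j < n) ratr b`_j * v 0 j
    = \sum_(j < n) ratr b`_j * (x 0 j - v 0 j).
  by rewrite -sumrB; apply: eq_bigr => j _; rewrite mulrBr.
apply: (le_trans (ler_norm _)); apply: (le_trans (ler_norm_sum _ _ _)).
rewrite /cnorm mulr_suml; apply: ler_sum => j _; rewrite normrM.
by apply: ler_wpM2l => //; apply: H.
Qed.

Lemma delta {n} (B : seq (seq rat)) (v : 'rV[R]_n) (e : R) : 0 < e ->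
  (forall b, b \in B -> cval b (vfun v) < 0) ->
  exists d, [/\ 0 < d, d <= e & forall b, b \in B -> cval b (vfun v) + cnorm n b * d < 0].
Proof.
move=> e0; elim: B => [|b B IH] HB.
  by exists e; split.
have [|d' [d0 de Hd]] := IH; first by move=> b' bB; apply: HB; rewrite inE bB orbT.
have hb := HB b (mem_head _ _).
set c := - cval b (vfun v).
have c0 : 0 < c by rewrite /c; lra.
set N := cnorm n b.
have N0 : 0 <= N by apply: sumr_ge0.
pose t := c / (N + 1).
have t0 : 0 < t by apply: divr_gt0 => //; lra.
have Et : t * (N + 1) = c by rewrite /t; field; lra.
have m1 : Num.min d' t <= t by rewrite ge_min lexx orbT.
have m2 : Num.min d' t <= d' by rewrite ge_min lexx.
exists (Num.min d' t); split.
- by rewrite lt_min d0 t0.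
- by rewrite ge_min de.
move=> b'; rewrite inE => /orP[/eqP ->|b'B].
  have := ler_wpM2l N0 m1 .
  rewrite -/N mulrDr mulr1 [t * N]mulrC in Et; rewrite /c in Et; rewrite -/N; lra.
have N'0 : 0 <= cnorm n b' by apply: sumr_ge0.
have := ler_wpM2l N'0 m2; have := Hd b' b'B; lra.
Qed.


Lemma densB {n} (A B : seq (seq rat)) (v : 'rV[R]_n) O :
  (forall a, a \in A -> cval a (vfun v) = 0) ->
  (forall b, b \in B -> cval b (vfun v) < 0) -> nbhs v O ->
  exists v' : 'rV[rat]_n, [/\ O (map_mx ratr v'),
    (forall a, a \in A -> cval a (vfun (map_mx ratr v')) = 0) &
    (forall b, b \in B -> cval b (vfun (map_mx ratr v')) < 0)].
Proof.
move=> HA HB HO.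
have [e e0 HOe] := @nbhs_box n v O HO.
have [d [d0 de Hd]] := @delta n B v e e0 HB.
pose M : 'M[rat]_(n, size A) := \matrix_(i, j) (nth [::] A j)`_i.
have HM (x : 'rV[R]_n) j : (x *m map_mx ratr M) 0 j = cval (nth [::] A j) (vfun x).
  by rewrite mxE cval_vfun; apply: eq_bigr => i _; rewrite !mxE mulrC.
have Hv : v *m map_mx ratr M = 0.
  by apply/matrixP => i j; rewrite (ord1 i) HM mxE HA // mem_nth.
have [x [Hx Hxd]] := @kerB n _ M v d Hv d0.
exists x; split.
- apply: HOe => j; rewrite distrC; exact: lt_le_trans (Hxd j) de.
- move=> a aA; rewrite -(nth_index [::] aA).
  have ia : (index a A < size A)%N by rewrite index_mem.
  have := HM (map_mx ratr x) (Ordinal ia) => /= <-.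
  by rewrite -map_mxM Hx map_mx0 mxE.
- move=> b bB; apply: le_lt_trans (Hd b bB).
  by apply: Lip => j; apply: ltW.
Qed.

Lemma densC {n} (Es : seq (seq cons_t)) (v : 'rV[R]_n) O :
  all (fun E => ~~ holdsS E (vfun v)) Es -> nbhs v O ->
  exists v' : 'rV[rat]_n, O (map_mx ratr v') /\
    all (fun E => ~~ holdsS E (vfun (map_mx ratr v'))) Es.
Proof.
move=> H HO.
pose A := [seq c.2 | c <- flatten Es & cval c.2 (vfun v) == 0].
pose B := [seq c.2 | c <- flatten Es & cval c.2 (vfun v) < 0].
have HA0 : forall a, a \in A -> cval a (vfun v) = 0.
  by move=> a /mapP[c]; rewrite mem_filter => /andP[/eqP h _] ->.
have HB0 : forall b, b \in B -> cval b (vfun v) < 0.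
  by move=> b /mapP[c]; rewrite mem_filter => /andP[h _] ->.
have [v' [HOv HA HB]] := @densB n A B v O HA0 HB0 HO.
exists v'; split => //; apply/allP => E EEs.
have /allPn[c cE Hc] := allP H E EEs.
apply/allPn; exists c => //.
have cF : c \in flatten Es by apply/flattenP; exists E.
move: c cE cF Hc => [[] a] cE cF; rewrite /holds /=.
  rewrite -leNgt le_eqVlt => /orP[h0|hlt].
    rewrite (HA a) ?ltxx //; apply/mapP; exists (true, a) => //.
    by rewrite mem_filter h0 cF.
  rewrite -leNgt ltW // (HB a) //; apply/mapP; exists (true, a) => //.
  by rewrite mem_filter hlt cF.
rewrite -ltNge => hlt; rewrite -ltNge (HB a) //; apply/mapP; exists (false, a) => //.
by rewrite mem_filter hlt cF.
Qed.

End FM.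

Theorem lemma8p7 (R : realType) (n m k1 k2 : nat)
  (phi1 : 'I_k1 -> 'rV[rat]_m) (chi1 : 'I_k1 -> 'rV[rat]_n)
  (phi2 : 'I_k2 -> 'rV[rat]_m) (chi2 : 'I_k2 -> 'rV[rat]_n)
  (v : 'rV[R]_n) :
  polyhedronP phi1 chi1 v = polyhedronP phi2 chi2 v ->
  full_dim (polyhedronP phi1 chi1 v) ->
  forall O : set 'rV[R]_n, nbhs v O ->
  exists v' : 'rV[rat]_n,
    O (map_mx ratr v') /\
    polyhedronP phi1 chi1 (map_mx ratr v' : 'rV[R]_n) =
    polyhedronP phi2 chi2 (map_mx ratr v' : 'rV[R]_n).
Proof.
move=> Heq _ O HO.
pose Es := @EsAB n m k1 k2 phi1 chi1 phi2 chi2 ++ @EsAB n m k2 k1 phi2 chi2 phi1 chi1.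
have Hv : all (fun E => ~~ @holdsS R E (@vfun R n v)) Es.
  rewrite all_cat; apply/andP; split.
    by apply/(@inclP R n m k1 k2 phi1 chi1 phi2 chi2); rewrite Heq.
  by apply/(@inclP R n m k2 k1 phi2 chi2 phi1 chi1); rewrite Heq.
have [v' [Ov' Hv']] := @densC R n Es v O Hv HO.
exists v'; split => //.
move: Hv'; rewrite all_cat => /andP[H12 H21].
apply/seteqP; split.
  exact/(@inclP R n m k1 k2 phi1 chi1 phi2 chi2).
exact/(@inclP R n m k2 k1 phi2 chi2 phi1 chi1).
Qed.
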